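(* Let $\mathbb{B}$ be a complete Boolean algebra, $A$ a maximal antichain in $\mathbb{B}$, and $S\subseteq\mathcal{P}(A)$ a family independent modulo $\{A\}$, i.e. for distinct $X_1,\dots,X_m,Y_1,\dots,Y_n\in S$ one has $(A\setminus X_1)\cup\dots\cup(A\setminus X_m)\cup Y_1\cup\dots\cup Y_n\neq A$. Write $\{\bigvee X: X\in S\}=S_0\cup S'$ with $S_0\cap S'=\emptyset$, and let $U_0$ be the filter on $\mathbb{B}$ generated by $S'\cup\{\neg\bigwedge I: I\subseteq S'\text{ infinite}\}$. Then $S_0$ is independent modulo $U_0$; in particular $U_0$ is a proper filter.
   Context: For a filter $F$ on a Boolean algebra $\mathbb{B}$, a set $T\subseteq\mathbb{B}$ is independent modulo $F$ if whenever $s_1,\dots,s_m,t_1,\dots,t_n\in T$ are distinct, $\neg s_1\vee\dots\vee\neg s_m\vee t_1\vee\dots\vee t_n\notin F$. *)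

(* Defs.v *)
(* Boolean algebras are MathComp's complemented distributive
   lattices with top and bottom (ctbDistrLatticeType). *)
From mathcomp Require Import all_boot all_order.
From Stdlib Require List.
Set Implicit Arguments. Unset Strict Implicit. Unset Printing Implicit Defensive.
Import Order.TTheory.
Local Open Scope order_scope.

Section BA.
Context {d : Order.disp_t} {B : ctbDistrLatticeType d}.

Definition is_sup (X : B -> Prop) (s : B) : Prop :=
  (forall x, X x -> x <= s) /\ (forall u, (forall x, X x -> x <= u) -> s <= u).

Definition is_inf (X : B -> Prop) (s : B) : Prop :=
  (forall x, X x -> s <= x) /\ (forall u, (forall x, X x -> u <= x) -> u <= s).

Definition complete_BA : Prop := forall X : B -> Prop, exists s, is_sup X s.

Definition antichain (A : B -> Prop) : Prop :=
  (forall a, A a -> a != \bot) /\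
  (forall a b, A a -> A b -> a != b -> a `&` b = \bot).

Definition maximal_antichain (A : B -> Prop) : Prop :=
  antichain A /\
  (forall A' : B -> Prop, antichain A' -> (forall a, A a -> A' a) ->
     forall a, A' a -> A a).

Definition is_filter (F : B -> Prop) : Prop :=
  F \top /\
  (forall x y, F x -> x <= y -> F y) /\
  (forall x y, F x -> F y -> F (x `&` y)).

Definition gen_filter (G : B -> Prop) (b : B) : Prop :=
  forall F, is_filter F -> (forall x, G x -> F x) -> F b.

Definition proper_filter (F : B -> Prop) : Prop := is_filter F /\ ~ F \bot.

Definition independent_mod (F : B -> Prop) (T : B -> Prop) : Prop :=
  forall ss ts : seq B,
    (forall s, s \in ss -> T s) -> (forall t, t \in ts -> T t) ->
    uniq (ss ++ ts) ->
    ~ F ((\join_(s <- ss) ~` s) `|` (\join_(t <- ts) t)).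

End BA.

Definition independent_mod_top {T : Type} (A : T -> Prop)
    (S : (T -> Prop) -> Prop) : Prop :=
  forall Xs Ys : list (T -> Prop),
    (forall X, List.In X Xs -> S X) -> (forall Y, List.In Y Ys -> S Y) ->
    List.NoDup (Xs ++ Ys) ->
    ~ (forall a, A a <->
         ((exists X, List.In X Xs /\ A a /\ ~ X a) \/ (exists Y, List.In Y Ys /\ Y a))).

Definition infinite_set {T : Type} (I : T -> Prop) : Prop :=
  ~ exists l : list T, forall x, I x -> List.In x l.

(* Main.v *)
Require Import Defs.
From mathcomp Require Import all_boot all_order.
From Stdlib Require List.
From Stdlib Require Import Classical ClassicalEpsilon.
Import Order.TTheory Order.Theory.
Local Open Scope order_scope.

Section Aux.
Context {d : Order.disp_t} {B : ctbDistrLatticeType d}.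

Lemma In_mem (x : B) l : List.In x l -> x \in l.
Proof.
elim: l => //= y l IH [->|/IH h]; rewrite inE ?eqxx //= h orbT //.
Qed.

Lemma mem_In (x : B) l : x \in l -> List.In x l.
Proof.
elim: l => //= y l IH; rewrite inE => /orP [/eqP ->|/IH h]; [left|right] => //.
Qed.

Lemma NoDup_map_inj (T : Type) (f : B -> T) (l : seq B) :
  uniq l -> {in l &, injective f} -> List.NoDup (map f l).
Proof.
elim: l => [|x l IH] /=; first by constructor.
move=> /andP[xl ul] inj; constructor.
- move=> /List.in_map_iff [y [fy iy]].
  have yl := In_mem _ _ iy.
  have eyx : y = x by apply: inj => //; rewrite inE ?yl ?eqxx ?orbT.
  by move: xl; rewrite -eyx yl.
- apply: IH => // u v uin vin; apply: inj; rewrite inE ?uin ?vin ?orbT //.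
Qed.

Lemma sup_unique (X : B -> Prop) (s t : B) : is_sup X s -> is_sup X t -> s = t.
Proof.
move=> [h1 h2] [h3 h4]; apply/le_anti/andP; split; [exact: h2 h3 | exact: h4 h1].
Qed.

Lemma sup_le_compl {A : B -> Prop} {X s a} :
  (forall a b, A a -> A b -> a != b -> a `&` b = \bot) ->
  (forall x, X x -> A x) -> A a -> ~ X a -> is_sup X s -> s <= ~` a.
Proof.
move=> Hdj HX Aa nXa [_ hs]; apply: hs => x Xx.
rewrite -disj_leC; apply/eqP; apply: Hdj => //; first exact: HX.
by apply/eqP => exa; apply: nXa; rewrite -exa.
Qed.

Lemma le_sup_mem {A : B -> Prop} {X s a} :
  (forall a, A a -> a != \bot) ->
  (forall a b, A a -> A b -> a != b -> a `&` b = \bot) ->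
  (forall x, X x -> A x) -> A a -> a <= s -> is_sup X s -> X a.
Proof.
move=> Hne Hdj HX Aa les hs; apply: NNPP => nXa.
have lsc := sup_le_compl Hdj HX Aa nXa hs.
have : a <= ~` a := le_trans les lsc.
by rewrite -disj_leC meetxx (negbTE (Hne a Aa)).
Qed.

Lemma gen_filter_filter (G : B -> Prop) : is_filter (gen_filter G).
Proof.
split; [|split].
- by move=> F [? _] _.
- move=> x y hx le F hF hG; have [_ [hup _]] := hF; exact: hup _ _ (hx F hF hG) le.
- move=> x y hx hy F hF hG; have [_ [_ hm]] := hF; exact: hm _ _ (hx F hF hG) (hy F hF hG).
Qed.

Lemma pick_ws {P : B -> Prop} {Il : list (B -> Prop)} (l0 : seq B):
  (forall I, List.In I Il -> (forall x, I x -> P x) /\ infinite_set I) ->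
  exists ws : seq B, uniq ws /\ (forall w, w \in ws -> w \notin l0 /\ P w) /\
   forall I, List.In I Il -> exists w, w \in ws /\ I w.
Proof.
elim: Il => [|I Il IH] H.
- by exists [::].
- have [ws [uws [hws hI]]] := IH (fun J hJ => H J (or_intror hJ)).
  have [hIP hinf] := H I (or_introl erefl).
  have [x [Ix nx]] : exists x, I x /\ ~ List.In x (l0 ++ ws).
  { apply: NNPP => hn; apply: hinf; exists (l0 ++ ws) => x Ix.
    apply: NNPP => nx; apply: hn; by exists x. }
  exists (x :: ws); split; [|split].
  + rewrite /= uws andbT; apply/negP => xw; apply: nx; apply/List.in_or_app; right; exact: mem_In xw.
  + move=> w; rewrite inE => /orP [/eqP -> | wws]; last exact: hws.
    split; last exact: hIP.
    apply/negP => xl; apply: nx; apply/List.in_or_app; left; exact: mem_In.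
  + move=> J [<-|hJ]; first by exists x; rewrite inE eqxx.
    have [w [ww Jw]] := hI J hJ; exists w; by rewrite inE ww orbT.
Qed.

End Aux.

Theorem mainTheorem3 (d : Order.disp_t) (B : ctbDistrLatticeType d)
  (HB : @complete_BA d B)
  (A : B -> Prop) (HA : maximal_antichain A)
  (S : (B -> Prop) -> Prop)
  (HSA : forall X, S X -> forall a, X a -> A a)
  (HS : independent_mod_top A S)
  (S0 S' : B -> Prop)
  (Hsplit : forall b, (exists X, S X /\ is_sup X b) <-> (S0 b \/ S' b))
  (Hdisj : forall b, ~ (S0 b /\ S' b)) :
  let U0 := gen_filter (fun b => S' b \/
              exists I : B -> Prop,
                (forall x, I x -> S' x) /\ infinite_set I /\
                exists m, is_inf I m /\ b = ~` m) in
  independent_mod U0 S0 /\ proper_filter U0.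
Proof.
move=> U0.
have [[Hne Hdj] _] := HA.
pose setof (b : B) : B -> Prop :=
  match excluded_middle_informative (exists X, S X /\ is_sup X b) with
  | left h => proj1_sig (constructive_indefinite_description _ h)
  | right _ => fun _ => False end.
have Hsetof : forall b, S0 b \/ S' b -> S (setof b) /\ is_sup (setof b) b.
{ move=> b /Hsplit h; rewrite /setof.
  destruct (excluded_middle_informative (exists X, S X /\ is_sup X b)) as [h'|h'].
  - exact: proj2_sig (constructive_indefinite_description _ h').
  - by case: (h' h). }
pose F (b : B) := exists (yl : seq B) (Il : list (B -> Prop)),
  (forall y, y \in yl -> S' y) /\
  (forall I, List.In I Il -> (forall x, I x -> S' x) /\ infinite_set I) /\
  forall a, A a -> (forall y, y \in yl -> a <= y) ->
    (forall I, List.In I Il -> exists x, I x /\ ~ a <= x) -> a <= b.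
have Ffil : is_filter F.
{ split; [|split].
  - exists [::], [::]; split => //; split => // *; exact: lex1.
  - move=> x y [yl [Il [h1 [h2 h3]]]] le; exists yl, Il; split => //; split => //.
    move=> a Aa ha hb; exact: le_trans (h3 a Aa ha hb) le.
  - move=> x y [yl [Il [h1 [h2 h3]]]] [yl' [Il' [h1' [h2' h3']]]].
    exists (yl ++ yl'), (Il ++ Il'); split; [|split].
    + by move=> z; rewrite mem_cat => /orP [/h1|/h1'].
    + by move=> I /List.in_app_iff [/h2|/h2'].
    + move=> a Aa ha hb; rewrite lexI; apply/andP; split.
      * apply: h3 => // [z zin|I Iin]; [apply: ha; rewrite mem_cat zin //|].
        by apply: hb; apply/List.in_app_iff; left.
      * apply: h3' => // [z zin|I Iin]; [apply: ha; rewrite mem_cat zin orbT //|].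
        by apply: hb; apply/List.in_app_iff; right. }
have UF : forall b, U0 b -> F b.
{ move=> b hb; apply: hb => // x [Sx | [I [hI [hinf [m [hm ->]]]]]].
  - exists [:: x], [::]; split; [|split] => //.
    + by move=> y; rewrite inE => /eqP ->.
    + by move=> a Aa ha _; apply: ha; rewrite inE eqxx.
  - exists [::], [:: I]; split; [|split] => //.
    + by move=> J [<-|].
    + move=> a Aa _ h; have [z [Ix nax]] := h I (or_introl erefl).
      have [X [SX hX]] := proj2 (Hsplit z) (or_intror (hI z Ix)).
      have nXa : ~ X a by move=> Xa; apply: nax; exact: (proj1 hX) a Xa.
      have := sup_le_compl Hdj (HSA X SX) Aa nXa hX => xa.
      have mx : m <= z := proj1 hm z Ix.
      by rewrite lexC; exact: le_trans mx xa. }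
have claim : forall ss ts : seq B,
    (forall s, s \in ss -> S0 s) -> (forall t, t \in ts -> S0 t) ->
    uniq (ss ++ ts) ->
    ~ F ((\join_(s <- ss) ~` s) `|` (\join_(t <- ts) t)).
{ move=> ss ts hss hts huniq [yl [Il [hyl [hIl hpt]]]].
  have [ws [uws [hws hI]]] := pick_ws (ss ++ ts ++ yl) hIl.
  set L1 := ss ++ undup yl. set L2 := ts ++ ws.
  have hL : forall x, x \in L1 ++ L2 -> S0 x \/ S' x.
  { move=> x; rewrite !mem_cat mem_undup => /orP [/orP [/hss|/hyl]|/orP [/hts|/hws []]]; tauto. }
  have U : uniq (L1 ++ L2).
  { have -> : uniq (L1 ++ L2) = uniq ((ss ++ ts) ++ (undup yl ++ ws)).
      by apply: perm_uniq; rewrite perm_catACA.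
    rewrite cat_uniq huniq /= cat_uniq undup_uniq uws /= andbT; apply/andP; split.
    - apply/hasPn => x; rewrite mem_cat mem_undup => /orP [xy|xw].
      + apply/negP; rewrite mem_cat => /orP [/hss|/hts] h0; exact: Hdisj x (conj h0 (hyl x xy)).
      + apply/negP => xin; have [/negP nx _] := hws x xw; apply: nx.
        by rewrite catA mem_cat xin.
    - apply/hasPn => x xw; rewrite mem_undup; apply/negP => xy.
      have [/negP nx _] := hws x xw; apply: nx; by rewrite !mem_cat xy !orbT. }
  have ND : List.NoDup (map setof L1 ++ map setof L2).
  { rewrite -map_cat; apply: NoDup_map_inj => // u v uin vin e.
    have [_ hu] := Hsetof u (hL u uin); have [_ hv] := Hsetof v (hL v vin).
    rewrite e in hu; exact: sup_unique hu hv. }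
  have inS : forall L, (forall x, x \in L -> S0 x \/ S' x) ->
      forall X, List.In X (map setof L) -> S X.
  { move=> L hL' X /List.in_map_iff [y [<- iy]]; exact: proj1 (Hsetof y (hL' y (In_mem _ _ iy))). }
  have hL1 : forall x, x \in L1 -> S0 x \/ S' x by move=> x xin; apply: hL; rewrite mem_cat xin.
  have hL2 : forall x, x \in L2 -> S0 x \/ S' x by move=> x xin; apply: hL; rewrite mem_cat xin orbT.
  have := HS _ _ (inS _ hL1) (inS _ hL2) ND.
  move=> /not_all_ex_not [a ha].
  have Aa : A a.
  { apply: NNPP => nA; apply: ha; split => // [][[X [_ [? _]]]|[Y [iY Ya]]] //.
    exfalso; apply: nA; exact: HSA Y (inS _ hL2 Y iY) a Ya. }
  have nR : ~ ((exists X, List.In X (map setof L1) /\ A a /\ ~ X a) \/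
                (exists Y, List.In Y (map setof L2) /\ Y a)).
  { by move=> R; apply: ha; split. }
  have hX : forall x, x \in L1 -> setof x a.
  { move=> x xin; apply: NNPP => nx; apply: nR; left; exists (setof x); split => //.
    apply/List.in_map_iff; exists x; split => //; exact: mem_In. }
  have hY : forall x, x \in L2 -> ~ setof x a.
  { move=> x xin ya; apply: nR; right; exists (setof x); split => //.
    apply/List.in_map_iff; exists x; split => //; exact: mem_In. }
  have hsub : forall x, S0 x \/ S' x -> forall z, setof x z -> A z.
  { move=> x hx; exact: HSA _ (proj1 (Hsetof x hx)). }
  have le_ac : a <= (\join_(s <- ss) ~` s) `|` (\join_(t <- ts) t).
  { apply: hpt => //.
    - move=> y yin; have yL : y \in L1 by rewrite mem_cat mem_undup yin orbT.
      exact: (proj1 (proj2 (Hsetof y (hL1 y yL)))) a (hX y yL).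
    - move=> I Iin; have [w [ww Iw]] := hI I Iin; exists w; split => // law.
      have wL : w \in L2 by rewrite mem_cat ww orbT.
      apply: (hY w wL); apply: (le_sup_mem Hne Hdj (hsub w (hL2 w wL)) Aa law).
      exact: proj2 (Hsetof w (hL2 w wL)). }
  have le_ca : (\join_(s <- ss) ~` s) `|` (\join_(t <- ts) t) <= ~` a.
  { rewrite leUx; apply/andP; split; apply/joinsP_seq => x xin _.
    - have xL : x \in L1 by rewrite mem_cat xin.
      rewrite leC; exact: (proj1 (proj2 (Hsetof x (hL1 x xL)))) a (hX x xL).
    - have xL : x \in L2 by rewrite mem_cat xin.
      apply: (sup_le_compl Hdj (hsub x (hL2 x xL)) Aa (hY x xL)).
      exact: proj2 (Hsetof x (hL2 x xL)). }
  have := le_trans le_ac le_ca.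
  by rewrite -disj_leC meetxx (negbTE (Hne a Aa)). }
split.
- move=> ss ts hss hts hu hU; exact: claim ss ts hss hts hu (UF _ hU).
- split; first exact: gen_filter_filter.
  move=> hU; apply: (claim [::] [::]) => //; rewrite !big_nil joinxx; exact: UF.
Qed.
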